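(* Let $A$ be a finite-dimensional Hilbert space and let $\{\Theta_\rho\}_{\rho\in\mathfrak{S}(A)}$ be a family of linear maps $\Theta_\rho:\mathfrak{B}(A)\to\mathfrak{B}(A)$ such that: $\Theta_\rho$ depends linearly on $\rho$; $\Theta_\rho(M)=\rho M$ whenever $M\in\mathfrak{B}(A)$ satisfies $[\rho,M]=0$; and each $\Theta_\rho$ is self-adjoint with respect to the Hilbert–Schmidt inner product $\langle X,Y\rangle=\mathrm{Tr}[X^\dagger Y]$. Then there is a real number $\mu$ such that $$\Theta_\rho(M)=\mu\,\rho M+(1-\mu)\,M\rho\quad\text{for all }\rho\in\mathfrak{S}(A),\ M\in\mathfrak{B}(A).$$ If moreover each $\Theta_\rho$ is positive semidefinite with respect to the Hilbert–Schmidt inner product (i.e. $\mathrm{Tr}[M^\dagger\Theta_\rho(M)]\ge0$ for all $M$), then $0\le\mu\le1$.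
   Context: $\mathfrak{B}(A)$ denotes the linear operators on $A$ and $\mathfrak{S}(A)$ the density operators on $A$; $[X,Y]=XY-YX$. Linear dependence on $\rho$ means $\rho\mapsto\Theta_\rho$ is (the restriction of) a linear map from $\mathfrak{B}(A)$ into the linear maps on $\mathfrak{B}(A)$. *)

(* Defs.v *)
From HB Require Import structures.
From mathcomp Require Import all_boot all_order all_algebra.
Set Implicit Arguments. Unset Strict Implicit. Unset Printing Implicit Defensive.
Import Order.TTheory GRing.Theory Num.Theory.
Local Open Scope ring_scope.

(* Scalars: C : numClosedFieldType (the complex numbers are an instance).
   The finite-dimensional Hilbert space A is C^n; B(A) = 'M[C]_n. *)

Definition hadj (C : numClosedFieldType) (n : nat) (X : 'M[C]_n) : 'M[C]_n :=
  (map_mx Num.conj X)^T.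

Definition hs_inner (C : numClosedFieldType) (n : nat) (X Y : 'M[C]_n) : C :=
  \tr (hadj X *m Y).

Definition psd_op (C : numClosedFieldType) (n : nat) (X : 'M[C]_n) : Prop :=
  hadj X = X /\ forall v : 'cV[C]_n, 0 <= ((map_mx Num.conj v)^T *m X *m v) 0 0.

Definition density (C : numClosedFieldType) (n : nat) (rho : 'M[C]_n) : Prop :=
  psd_op rho /\ \tr rho = 1.

(* Main.v *)
Require Import Defs.
From HB Require Import structures.
From mathcomp Require Import all_boot all_order all_algebra.
From mathcomp Require Import ring.
Set Implicit Arguments. Unset Strict Implicit. Unset Printing Implicit Defensive.
Import Order.TTheory GRing.Theory Num.Theory.
Local Open Scope ring_scope.
Section Adj.
Variable C : numClosedFieldType.

Definition adj m p (A : 'M[C]_(m,p)) : 'M[C]_(p,m) := (map_mx Num.conj A)^T.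

Lemma adjE m p (A : 'M[C]_(m,p)) i j : adj A i j = (A j i)^*.
Proof. by rewrite !mxE. Qed.

Lemma hadjE n (A : 'M[C]_n) : hadj A = adj A.
Proof. by []. Qed.

Lemma adjK m p (A : 'M[C]_(m,p)) : adj (adj A) = A.
Proof. by apply/matrixP=> i j; rewrite !adjE conjCK. Qed.

Lemma adjM m p q (A : 'M[C]_(m,p)) (B : 'M[C]_(p,q)) : adj (A *m B) = adj B *m adj A.
Proof.
apply/matrixP=> i j; rewrite adjE !mxE rmorph_sum; apply: eq_bigr => k _.
by rewrite !adjE rmorphM mulrC.
Qed.

Lemma adjD m p (A B : 'M[C]_(m,p)) : adj (A + B) = adj A + adj B.
Proof. by apply/matrixP=> i j; rewrite !(adjE, mxE) rmorphD. Qed.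

Lemma adjZ m p a (A : 'M[C]_(m,p)) : adj (a *: A) = a^* *: adj A.
Proof. by apply/matrixP=> i j; rewrite !(adjE, mxE) rmorphM. Qed.

Lemma adjN m p (A : 'M[C]_(m,p)) : adj (- A) = - adj A.
Proof. by apply/matrixP=> i j; rewrite !(adjE, mxE) rmorphN. Qed.

Lemma adjB m p (A B : 'M[C]_(m,p)) : adj (A - B) = adj A - adj B.
Proof. by rewrite adjD adjN. Qed.

Lemma adj0 m p : adj (0 : 'M[C]_(m,p)) = 0.
Proof. by apply/matrixP=> i j; rewrite !(adjE, mxE) rmorph0. Qed.

Lemma adj_delta m p (i : 'I_m) (j : 'I_p) : adj (delta_mx i j) = delta_mx j i.
Proof.
by apply/matrixP=> k l; rewrite adjE !mxE rmorph_nat andbC.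
Qed.

Lemma trace_conj n (A : 'M[C]_n) : \tr (map_mx Num.conj A) = (\tr A)^*.
Proof. by rewrite /mxtrace rmorph_sum; apply: eq_bigr => i _; rewrite mxE. Qed.

Lemma tr_delta n (i j : 'I_n) (W : 'M[C]_n) : \tr (delta_mx j i *m W) = W i j.
Proof.
rewrite /mxtrace (bigD1 j) //= big1 ?addr0.
  rewrite mxE (bigD1 i) //= big1 ?addr0; first by rewrite mxE !eqxx mul1r.
  by move=> k /negbTE ki; rewrite mxE ki andbF mul0r.
move=> k /negbTE kj; rewrite mxE big1 // => l _; rewrite mxE kj /= mul0r //.
Qed.

End Adj.
Section Alg.
Variable C : numClosedFieldType.

Lemma conjCN (x : C) : (- x)^* = - x^*.
Proof. by rewrite rmorphN. Qed.

Lemma two_pt (x y : C) : (forall s : C, s^* * x + s * y = 0) -> x = 0 /\ y = 0.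
Proof.
move=> h; have h1 := h 1; have h3 := h 'i.
rewrite rmorph1 !mul1r in h1; rewrite conjCi in h3.
have x2 : x *+ 2 = 0.
  have -> : x *+ 2 = (x + y) + 'i * (- 'i * x + 'i * y) by ring: (sqrCi C).
  by rewrite h1 h3 mulr0 addr0.
have x0 : x = 0 by apply/eqP; move: x2 => /eqP; rewrite mulrn_eq0.
by split => //; move: h1; rewrite x0 add0r.
Qed.

Lemma four_pt (a b c e : C) :
  (forall s : C, s^* * a + s^* ^+ 2 * b + (s * s^*) * c + s * e = 0) ->
  [/\ a = 0, b = 0, c = 0 & e = 0].
Proof.
move=> h; have h1 := h 1; have h2 := h (-1); have h3 := h 'i; have h4 := h (- 'i).
rewrite rmorph1 in h1; rewrite rmorphN rmorph1 in h2.
rewrite conjCi in h3; have ci : (- 'i)^* = 'i :> C by rewrite conjCN conjCi opprK.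
rewrite ci in h4.
have z4 : forall x : C, x *+ 4 = 0 -> x = 0.
  by move=> x /eqP; rewrite mulrn_eq0 => /eqP.
split; apply: z4.
- have -> : a *+ 4 = (1 * a + 1 ^+ 2 * b + 1 * 1 * c + 1 * e)
      - (-1 * a + (-1) ^+ 2 * b + (-1 * -1) * c + -1 * e)
      + 'i * ((- 'i) * a + (- 'i) ^+ 2 * b + ('i * - 'i) * c + 'i * e)
      - 'i * ('i * a + 'i ^+ 2 * b + (- 'i * 'i) * c + - 'i * e)
    by ring: (sqrCi C).
  by rewrite h1 h2 h3 h4 !mulr0 !subr0 addr0.
- have -> : b *+ 4 = (1 * a + 1 ^+ 2 * b + 1 * 1 * c + 1 * e)
      + (-1 * a + (-1) ^+ 2 * b + (-1 * -1) * c + -1 * e)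
      - ((- 'i) * a + (- 'i) ^+ 2 * b + ('i * - 'i) * c + 'i * e)
      - ('i * a + 'i ^+ 2 * b + (- 'i * 'i) * c + - 'i * e)
    by ring: (sqrCi C).
  by rewrite h1 h2 h3 h4 !subr0 addr0.
- have -> : c *+ 4 = (1 * a + 1 ^+ 2 * b + 1 * 1 * c + 1 * e)
      + (-1 * a + (-1) ^+ 2 * b + (-1 * -1) * c + -1 * e)
      + ((- 'i) * a + (- 'i) ^+ 2 * b + ('i * - 'i) * c + 'i * e)
      + ('i * a + 'i ^+ 2 * b + (- 'i * 'i) * c + - 'i * e)
    by ring: (sqrCi C).
  by rewrite h1 h2 h3 h4 !addr0.
- have -> : e *+ 4 = (1 * a + 1 ^+ 2 * b + 1 * 1 * c + 1 * e)
      - (-1 * a + (-1) ^+ 2 * b + (-1 * -1) * c + -1 * e)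
      - 'i * ((- 'i) * a + (- 'i) ^+ 2 * b + ('i * - 'i) * c + 'i * e)
      + 'i * ('i * a + 'i ^+ 2 * b + (- 'i * 'i) * c + - 'i * e)
    by ring: (sqrCi C).
  by rewrite h1 h2 h3 h4 !mulr0 !subr0 addr0.
Qed.

Lemma two_pt_mx m p (X Y : 'M[C]_(m,p)) :
  (forall s : C, s^* *: X + s *: Y = 0) -> X = 0 /\ Y = 0.
Proof.
move=> h.
have H : forall i j, X i j = 0 /\ Y i j = 0.
  move=> i j; apply: two_pt => s.
  by move/matrixP: (h s) => /(_ i j); rewrite !mxE.
by split; apply/matrixP => i j; rewrite mxE; case: (H i j).
Qed.

Lemma four_pt_mx m p (A B Cc E : 'M[C]_(m,p)) :
  (forall s : C, s^* *: A + s^* ^+ 2 *: B + (s * s^*) *: Cc + s *: E = 0) ->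
  [/\ A = 0, B = 0, Cc = 0 & E = 0].
Proof.
move=> h.
have H : forall i j, [/\ A i j = 0, B i j = 0, Cc i j = 0 & E i j = 0].
  move=> i j; apply: four_pt => s.
  by move/matrixP: (h s) => /(_ i j); rewrite !mxE.
by split; apply/matrixP => i j; rewrite mxE; case: (H i j).
Qed.

End Alg.
Section HS.
Variable C : numClosedFieldType.
Variable n : nat.
Implicit Types X Y Z W R S : 'M[C]_n.

Lemma hsZr X a Y : hs_inner X (a *: Y) = a * hs_inner X Y.
Proof. by rewrite /hs_inner -scalemxAr mxtraceZ. Qed.
Lemma hsDr X Y Z : hs_inner X (Y + Z) = hs_inner X Y + hs_inner X Z.
Proof. by rewrite /hs_inner mulmxDr mxtraceD. Qed.
Lemma hsZl X a Y : hs_inner (a *: X) Y = a^* * hs_inner X Y.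
Proof. by rewrite /hs_inner !hadjE adjZ -scalemxAl mxtraceZ. Qed.
Lemma hsDl X Y Z : hs_inner (X + Y) Z = hs_inner X Z + hs_inner Y Z.
Proof. by rewrite /hs_inner !hadjE adjD mulmxDl mxtraceD. Qed.
Lemma hsC X Y : hs_inner X Y = (hs_inner Y X)^*.
Proof.
rewrite /hs_inner -trace_conj !hadjE.
have -> : map_mx Num.conj (adj Y *m X) = (adj (adj Y *m X))^T by rewrite /adj trmxK.
by rewrite adjM adjK mxtrace_tr.
Qed.
Lemma hs_delta (i j : 'I_n) W : hs_inner (delta_mx i j) W = W i j.
Proof. by rewrite /hs_inner hadjE adj_delta tr_delta. Qed.

Definition ev (i : 'I_n) : 'cV[C]_n := delta_mx i 0.
Definition P (v : 'cV[C]_n) : 'M[C]_n := v *m adj v.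

Lemma P_ev i j : ev i *m adj (ev j) = delta_mx i j.
Proof. by rewrite /ev adj_delta mul_delta_mx. Qed.

Lemma P_expand a b (s : C) : P (ev a + s *: ev b) =
  delta_mx a a + s^* *: delta_mx a b + s *: delta_mx b a + (s * s^*) *: delta_mx b b.
Proof.
rewrite /P adjD adjZ mulmxDl !mulmxDr -!scalemxAl -!scalemxAr !P_ev scalerA.
by rewrite !addrA.
Qed.

Lemma P_delta a : P (ev a) = delta_mx a a.
Proof. exact: P_ev. Qed.

Lemma ev2_neq0 a b (s : C) : a != b -> ev a + s *: ev b != 0.
Proof.
move=> ab; apply/eqP => /matrixP/(_ a 0); rewrite !mxE !eqxx (negbTE ab) /=.
by rewrite mulr0 addr0 => /eqP; rewrite oner_eq0.
Qed.

Lemma ev_neq0 a : ev a != 0.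
Proof.
apply/eqP => /matrixP/(_ a 0); rewrite !mxE !eqxx /=.
by move/eqP; rewrite oner_eq0.
Qed.

Lemma psd_P v : psd_op (P v).
Proof.
split; first by rewrite hadjE /P adjM adjK.
move=> x; change (0 <= (adj x *m P v *m x) 0 0).
rewrite /P mulmxA -mulmxA.
have -> : adj v *m x = adj (adj x *m v) by rewrite adjM adjK.
by rewrite mxE big_ord1 adjE mul_conjC_ge0.
Qed.

Lemma psdD R S : psd_op R -> psd_op S -> psd_op (R + S).
Proof.
move=> [hR qR] [hS qS]; split; first by rewrite !hadjE adjD -!hadjE hR hS.
by move=> x; rewrite mulmxDr mulmxDl mxE addr_ge0.
Qed.

Lemma trP v : \tr (P v) = \sum_i v i 0 * (v i 0)^*.
Proof. by apply: eq_bigr => i _; rewrite mxE big_ord1 adjE. Qed.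

Lemma trP_ge0 v : 0 <= \tr (P v).
Proof. by rewrite trP sumr_ge0 // => i _; rewrite mul_conjC_ge0. Qed.

Lemma trP_gt0 v : v != 0 -> 0 < \tr (P v).
Proof.
move=> v0; have [i Hi] : exists i, v i 0 != 0.
  case: (pickP (fun i => v i 0 != 0)) => [i Hi|h]; first by exists i.
  case/eqP: v0; apply/matrixP => i j; rewrite (ord1 j) mxE.
  by move: (h i) => /= /negbFE /eqP.
rewrite lt0r trP_ge0 andbT trP psumr_neq0; last by move=> k _; rewrite mul_conjC_ge0.
apply/hasP; exists i; first exact: mem_index_enum.
by rewrite /= lt0r mul_conjC_ge0 andbT mulf_neq0 // conjC_eq0.
Qed.

Definition good R := psd_op R /\ 0 < \tr R.

Lemma good_P v : v != 0 -> good (P v).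
Proof. by move=> v0; split; [apply: psd_P | apply: trP_gt0]. Qed.

Lemma good_addP R v : good R -> good (R + P v).
Proof.
move=> [pR tR]; split; first by apply: psdD => //; apply: psd_P.
by rewrite mxtraceD ltr_wpDr // trP_ge0.
Qed.

Lemma good_dens R : good R -> density ((\tr R)^-1 *: R).
Proof.
move=> [[hR qR] tR]; have c0 : 0 < (\tr R)^-1 by rewrite invr_gt0.
have cr : ((\tr R)^-1)^* = (\tr R)^-1 by apply: conj_Creal; apply: gtr0_real.
split; [split|].
- by rewrite hadjE adjZ -hadjE hR cr.
- move=> x; rewrite -scalemxAr -scalemxAl mxE; apply: mulr_ge0; first exact: ltW.
  exact: qR.
- by rewrite mxtraceZ mulVf // lt0r_neq0.
Qed.

End HS.
Arguments ev {C n}.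
Arguments P {C n}.
Section Main.
Variable C : numClosedFieldType.
Variable n : nat.
Variable T : 'M[C]_n -> 'M[C]_n -> 'M[C]_n.
Hypothesis Hlin_rho : forall (a : C) (r1 r2 M : 'M[C]_n),
      T (a *: r1 + r2) M = a *: T r1 M + T r2 M.
Hypothesis Hlin_M : forall rho : 'M[C]_n, density rho ->
      forall (a : C) (M1 M2 : 'M[C]_n),
        T rho (a *: M1 + M2) = a *: T rho M1 + T rho M2.
Hypothesis Hcomm : forall rho : 'M[C]_n, density rho ->
      forall M : 'M[C]_n, rho *m M - M *m rho = 0 -> T rho M = rho *m M.
Hypothesis Hsa : forall rho : 'M[C]_n, density rho ->
      forall X Y : 'M[C]_n, hs_inner X (T rho Y) = hs_inner (T rho X) Y.
Implicit Types X Y Z W R S M : 'M[C]_n.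

Lemma T0l M : T 0 M = 0.
Proof.
have h := Hlin_rho 1 0 0 M; rewrite scaler0 addr0 scale1r in h.
by apply: (@addrI _ (T 0 M)); rewrite addr0 -h.
Qed.
Lemma TDl X Y M : T (X + Y) M = T X M + T Y M.
Proof. by have := Hlin_rho 1 X Y M; rewrite !scale1r. Qed.
Lemma TZl a X M : T (a *: X) M = a *: T X M.
Proof. by have := Hlin_rho a X 0 M; rewrite addr0 T0l addr0. Qed.
Lemma TNl X M : T (- X) M = - T X M.
Proof. by rewrite -scaleN1r TZl scaleN1r. Qed.
Lemma TBl X Y M : T (X - Y) M = T X M - T Y M.
Proof. by rewrite TDl TNl. Qed.

Lemma good_T R M : good R -> T R M = \tr R *: T ((\tr R)^-1 *: R) M.
Proof.
by move=> [_ tR]; rewrite TZl scalerA divff ?scale1r // lt0r_neq0.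
Qed.

Lemma good_comm R M : good R -> R *m M = M *m R -> T R M = R *m M.
Proof.
move=> gR hc; have [_ tR] := gR.
rewrite (good_T _ gR) Hcomm; first by rewrite -scalemxAl scalerA divff ?scale1r // lt0r_neq0.
  exact: good_dens.
by rewrite -scalemxAl -scalemxAr hc subrr.
Qed.

Lemma good_linM R a M1 M2 : good R -> T R (a *: M1 + M2) = a *: T R M1 + T R M2.
Proof.
move=> gR; rewrite !(good_T _ gR) Hlin_M; last exact: good_dens.
by rewrite scalerDr !scalerA mulrC.
Qed.

Lemma good_sa R X Y : good R -> hs_inner X (T R Y) = hs_inner (T R X) Y.
Proof.
move=> gR; have [_ tR] := gR.
have cr : (\tr R)^* = \tr R by apply: conj_Creal; apply: gtr0_real.
rewrite !(good_T _ gR) hsZr hsZl cr Hsa //; exact: good_dens.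
Qed.

Lemma span_ind (Pr : 'M[C]_n -> Prop) :
  Pr 0 -> (forall a X Y, Pr X -> Pr Y -> Pr (a *: X + Y)) ->
  (forall v, v != 0 -> Pr (P v)) -> forall X, Pr X.
Proof.
move=> P0 Plin PP.
have PZ : forall a X, Pr X -> Pr (a *: X) by move=> a X hX; rewrite -[_ *: _]addr0; apply: (Plin).
have PD : forall X Y, Pr X -> Pr Y -> Pr (X + Y) by move=> X Y hX hY; rewrite -[X]scale1r; apply: (Plin).
have PB : forall X Y, Pr X -> Pr Y -> Pr (X - Y) by move=> X Y hX hY; rewrite -scaleN1r; apply: (PD) => //; apply: (PZ).
have Pdelta : forall i j, Pr (delta_mx i j).
  move=> i j; case: (eqVneq i j) => [<-|ij].
    by rewrite -P_delta; apply: (PP); apply: ev_neq0.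
  have -> : delta_mx i j = 2^-1 *: (P (ev i + 1 *: ev j) + 'i *: P (ev i + 'i *: ev j)
        - (1 + 'i) *: (P (ev i) + P (ev j))) :> 'M[C]_n.
    rewrite !P_expand !P_delta rmorph1 conjCi.
    apply/matrixP => k l; rewrite !mxE.
    have h2 : (2:C) != 0 by rewrite pnatr_eq0.
    field: (sqrCi C) => //.
  apply: (PZ); apply: (PB).
    apply: (PD); first by apply: (PP); apply: ev2_neq0.
    by apply: (PZ); apply: (PP); apply: ev2_neq0.
  by apply: (PZ); apply: (PD); apply: (PP); apply: ev_neq0.
have Psum : forall (I : finType) (F : I -> 'M[C]_n), (forall i, Pr (F i)) -> Pr (\sum_i F i).
  by move=> I F hF; apply: big_rec => // i x _ hx; apply: (PD).
move=> X; rewrite (matrix_sum_delta X).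
apply: (Psum) => i; apply: (Psum) => j; exact: (PZ).
Qed.

End Main.
Section Main2.
Variable C : numClosedFieldType.
Variable n : nat.
Variable T : 'M[C]_n -> 'M[C]_n -> 'M[C]_n.
Hypothesis Hlin_rho : forall (a : C) (r1 r2 M : 'M[C]_n),
      T (a *: r1 + r2) M = a *: T r1 M + T r2 M.
Hypothesis Hlin_M : forall rho : 'M[C]_n, density rho ->
      forall (a : C) (M1 M2 : 'M[C]_n),
        T rho (a *: M1 + M2) = a *: T rho M1 + T rho M2.
Hypothesis Hcomm : forall rho : 'M[C]_n, density rho ->
      forall M : 'M[C]_n, rho *m M - M *m rho = 0 -> T rho M = rho *m M.
Hypothesis Hsa : forall rho : 'M[C]_n, density rho ->
      forall X Y : 'M[C]_n, hs_inner X (T rho Y) = hs_inner (T rho X) Y.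
Implicit Types X Y Z W R S M : 'M[C]_n.

Let T0l := T0l Hlin_rho.
Let TDl := TDl Hlin_rho.
Let TZl := TZl Hlin_rho.
Let TNl := TNl Hlin_rho.
Let TBl := TBl Hlin_rho.
Let good_comm := good_comm Hlin_rho Hcomm.
Let good_linM := good_linM Hlin_rho Hlin_M.
Let good_sa := good_sa Hlin_rho Hsa.

Lemma TlinR R a M1 M2 : T R (a *: M1 + M2) = a *: T R M1 + T R M2.
Proof.
move: R; apply: span_ind.
- by rewrite !T0l scaler0 addr0.
- move=> b X Y hX hY; rewrite !Hlin_rho hX hY.
  by apply/matrixP => i j; rewrite !mxE; ring.
- by move=> v v0; apply: good_linM; apply: good_P.
Qed.

Lemma Tr0 R : T R 0 = 0.
Proof.
have h := TlinR R 1 0 0; rewrite scaler0 addr0 scale1r in h.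
by apply: (@addrI _ (T R 0)); rewrite addr0 -h.
Qed.
Lemma TDr R X Y : T R (X + Y) = T R X + T R Y.
Proof. by have := TlinR R 1 X Y; rewrite !scale1r. Qed.
Lemma TZr R a X : T R (a *: X) = a *: T R X.
Proof. by have := TlinR R a X 0; rewrite addr0 Tr0 addr0. Qed.
Lemma TNr R X : T R (- X) = - T R X.
Proof. by rewrite -scaleN1r TZr scaleN1r. Qed.
Lemma TBr R X Y : T R (X - Y) = T R X - T R Y.
Proof. by rewrite TDr TNr. Qed.

Lemma Tsym X Y : T X Y + T Y X = X *m Y + Y *m X.
Proof.
move: X Y; apply: span_ind.
- by move=> Y; rewrite T0l Tr0 mul0mx mulmx0 addr0.
- move=> b X1 X2 h1 h2 Y; rewrite Hlin_rho TlinR.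
  move: (h1 Y) (h2 Y); rewrite mulmxDl mulmxDr -scalemxAl -scalemxAr => e1 e2.
  apply/matrixP => i j; move/matrixP: e1 => /(_ i j); move/matrixP: e2 => /(_ i j).
  rewrite !mxE => e2 e1.
  transitivity (b * (T X1 Y i j + T Y X1 i j) + (T X2 Y i j + T Y X2 i j)); first ring.
  by rewrite e1 e2; ring.
move=> v v0; apply: span_ind.
- by rewrite T0l Tr0 mul0mx mulmx0 addr0.
- move=> b X1 X2 e1 e2; rewrite Hlin_rho TlinR.
  move: e1 e2; rewrite mulmxDl mulmxDr -scalemxAl -scalemxAr => e1 e2.
  apply/matrixP => i j; move/matrixP: e1 => /(_ i j); move/matrixP: e2 => /(_ i j).
  rewrite !mxE => e2 e1.
  transitivity (b * (T (P v) X1 i j + T X1 (P v) i j) + (T (P v) X2 i j + T X2 (P v) i j)); first ring.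
  by rewrite e1 e2; ring.
move=> w w0.
have gR : good (P v + P w) by apply: good_addP; apply: good_P.
have e := good_comm gR (erefl _).
have ev := good_comm (good_P v0) (erefl _).
have ew := good_comm (good_P w0) (erefl _).
move: e; rewrite TDl !TDr ev ew mulmxDl !mulmxDr => e.
apply/matrixP => i j; move/matrixP: e => /(_ i j); rewrite !mxE => e.
transitivity ((T (P v) (P v) i j + T (P v) (P w) i j + (T (P w) (P v) i j + T (P w) (P w) i j))
   - (P v *m P v) i j - (P w *m P w) i j); first by rewrite ev ew !mxE; ring.
by rewrite ev ew !mxE in e *; rewrite e; ring.
Qed.

Lemma Tadj X Y Z : hs_inner Z (T X Y) = hs_inner (T (hadj X) Z) Y.
Proof.
move: X Y Z; apply: span_ind.
- move=> Y Z; rewrite T0l hadjE adj0 T0l.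
  by rewrite /hs_inner mulmx0 mxtrace0 hadjE adj0 mul0mx mxtrace0.
- move=> b X1 X2 h1 h2 Y Z.
  rewrite Hlin_rho hsDr hsZr h1 h2 [hadj (_ + _)]hadjE adjD adjZ -!hadjE Hlin_rho hsDl hsZl.
  by rewrite conjCK.
- move=> v v0 Y Z; have -> : hadj (P v) = P v by rewrite hadjE /P adjM adjK.
  by apply: good_sa; apply: good_P.
Qed.

End Main2.
Section Main3.
Variable C : numClosedFieldType.
Variable n : nat.
Variable T : 'M[C]_n -> 'M[C]_n -> 'M[C]_n.
Hypothesis Hlin_rho : forall (a : C) (r1 r2 M : 'M[C]_n),
      T (a *: r1 + r2) M = a *: T r1 M + T r2 M.
Hypothesis Hlin_M : forall rho : 'M[C]_n, density rho ->
      forall (a : C) (M1 M2 : 'M[C]_n),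
        T rho (a *: M1 + M2) = a *: T rho M1 + T rho M2.
Hypothesis Hcomm : forall rho : 'M[C]_n, density rho ->
      forall M : 'M[C]_n, rho *m M - M *m rho = 0 -> T rho M = rho *m M.
Hypothesis Hsa : forall rho : 'M[C]_n, density rho ->
      forall X Y : 'M[C]_n, hs_inner X (T rho Y) = hs_inner (T rho X) Y.
Variable mu : C.
Hypothesis mu_real : mu^* = mu.
Implicit Types X Y Z W R S M : 'M[C]_n.

Let T0l := T0l Hlin_rho.
Let TDl := TDl Hlin_rho.
Let TZl := TZl Hlin_rho.
Let TNl := TNl Hlin_rho.
Let TBl := TBl Hlin_rho.
Let TDr := TDr Hlin_rho Hlin_M.
Let TZr := TZr Hlin_rho Hlin_M.
Let TNr := TNr Hlin_rho Hlin_M.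
Let TBr := TBr Hlin_rho Hlin_M.
Let Tr0 := Tr0 Hlin_rho Hlin_M.
Let good_comm := good_comm Hlin_rho Hcomm.
Let Tsym := Tsym Hlin_rho Hlin_M Hcomm.
Let Tadj := Tadj Hlin_rho Hsa.

Fact D_key : unit. Proof. by []. Qed.
Definition D X Y := locked_with D_key (T X Y - mu *: (X *m Y) - (1 - mu) *: (Y *m X)).
Lemma DE X Y : D X Y = T X Y - mu *: (X *m Y) - (1 - mu) *: (Y *m X).
Proof. by rewrite /D unlock. Qed.

Lemma DDl X Y M : D (X + Y) M = D X M + D Y M.
Proof.
rewrite !DE TDl mulmxDl mulmxDr !scalerDr.
by apply/matrixP => i j; rewrite !mxE; ring.
Qed.
Lemma DZl a X M : D (a *: X) M = a *: D X M.
Proof.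
rewrite !DE TZl -scalemxAl -scalemxAr.
by apply/matrixP => i j; rewrite !mxE; ring.
Qed.
Lemma DDr X Y M : D M (X + Y) = D M X + D M Y.
Proof.
rewrite !DE TDr mulmxDl mulmxDr !scalerDr.
by apply/matrixP => i j; rewrite !mxE; ring.
Qed.
Lemma DZr a X M : D M (a *: X) = a *: D M X.
Proof.
rewrite !DE TZr -scalemxAl -scalemxAr.
by apply/matrixP => i j; rewrite !mxE; ring.
Qed.
Lemma DNl X M : D (- X) M = - D X M.
Proof. by rewrite -scaleN1r DZl scaleN1r. Qed.
Lemma DNr X M : D M (- X) = - D M X.
Proof. by rewrite -scaleN1r DZr scaleN1r. Qed.
Lemma DBl X Y M : D (X - Y) M = D X M - D Y M.
Proof. by rewrite DDl DNl. Qed.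
Lemma DBr X Y M : D M (X - Y) = D M X - D M Y.
Proof. by rewrite DDr DNr. Qed.
Lemma D0l M : D 0 M = 0.
Proof. by rewrite DE T0l mul0mx mulmx0 !scaler0 !subr0. Qed.

Lemma Dsym X Y : D X Y = - D Y X.
Proof.
rewrite !DE; move: (Tsym X Y); move: (X *m Y) (Y *m X) => a b e.
apply/matrixP => i j; move/matrixP: e => /(_ i j); rewrite !mxE => e.
transitivity ((T X Y i j + T Y X i j) - T Y X i j - mu * a i j - (1 - mu) * b i j); first ring.
by rewrite e; ring.
Qed.

Lemma DXX X : D X X = 0.
Proof.
have e := Dsym X X; apply/matrixP => i j; move/matrixP: e => /(_ i j).
rewrite !mxE => e.
have h : D X X i j *+ 2 = 0 by rewrite mulr2n {1}e addNr.
by move/eqP: h; rewrite mulrn_eq0 => /eqP.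
Qed.

Lemma D_good R M : good R -> R *m M = M *m R -> D R M = 0.
Proof.
move=> gR e; rewrite DE good_comm // e; move: (M *m R) => A.
by apply/matrixP => i j; rewrite !mxE; ring.
Qed.

Lemma D_G (w x y : 'cV[C]_n) : adj w *m x = 0 -> adj y *m w = 0 ->
  D (P w) (x *m adj y) = 0.
Proof.
move=> hx hy; case: (eqVneq w 0) => [->|w0].
  by rewrite /P mul0mx D0l.
apply: D_good; first exact: good_P.
by rewrite /P !mulmxA -(mulmxA w) hx mulmx0 !mul0mx -(mulmxA x) hy mulmx0 !mul0mx.
Qed.

Lemma hsNr X Y : hs_inner X (- Y) = - hs_inner X Y.
Proof. by rewrite -scaleN1r hsZr mulN1r. Qed.
Lemma hsNl X Y : hs_inner (- X) Y = - hs_inner X Y.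
Proof. by rewrite -scaleN1r hsZl conjCN rmorph1 mulN1r. Qed.

Lemma D_adj X Y Z : hs_inner Z (D X Y) = hs_inner (D (hadj X) Z) Y.
Proof.
rewrite !DE !(hsDr, hsDl, hsNr, hsNl, hsZr, hsZl) Tadj.
have e1 : hs_inner (hadj X *m Z) Y = hs_inner Z (X *m Y).
  by rewrite /hs_inner !hadjE adjM adjK -mulmxA.
have e2 : hs_inner (Z *m hadj X) Y = hs_inner Z (Y *m X).
  by rewrite /hs_inner !hadjE adjM adjK -mulmxA mxtrace_mulC mulmxA.
have mr : mu \is Num.real by rewrite CrealE mu_real.
have c1 : (1 - mu)^* = 1 - mu by apply: conj_Creal; rewrite rpredB ?rpred1.
by rewrite e1 e2 c1 mu_real.
Qed.

Definition t Z X Y := \tr (Z *m D X Y).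

Lemma t_entry X Y i j : D X Y i j = t (delta_mx j i) X Y.
Proof. by rewrite /t tr_delta. Qed.

Lemma t_hs Z X Y : t Z X Y = hs_inner (hadj Z) (D X Y).
Proof. by rewrite /t /hs_inner !hadjE adjK. Qed.

Lemma tA Z X Y : t Z X Y = - t Z Y X.
Proof. by rewrite /t (Dsym X Y) mulmxN raddfN. Qed.

Lemma tB Z X Y : t Z X Y = - t X Z Y.
Proof.
rewrite t_hs D_adj Dsym hsNl hsC D_adj [hadj (hadj Z)]hadjE !hadjE adjK.
by rewrite -hsC -hadjE -t_hs.
Qed.

Lemma tcyc Z X Y : t Z X Y = t X Y Z.
Proof. by rewrite tB tA opprK. Qed.

Local Notation EE i j := (delta_mx i j : 'M[C]_n).

Lemma evdot0 (a c : 'I_n) : a != c -> adj (ev a) *m (ev c : 'cV[C]_n) = 0.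
Proof. by move=> ac; rewrite /ev adj_delta mul_delta_mx_0. Qed.
Lemma evdot (a : 'I_n) : adj (ev a) *m (ev a : 'cV[C]_n) = delta_mx 0 0.
Proof. by rewrite /ev adj_delta mul_delta_mx. Qed.

Lemma t_zero Z X Y : D X Y = 0 -> t Z X Y = 0.
Proof. by move=> e; rewrite /t e mulmx0 raddf0. Qed.
Lemma t_rep23 Z X : t Z X X = 0.
Proof. by apply: t_zero; apply: DXX. Qed.
Lemma t_rep13 X Y : t X Y X = 0.
Proof. by rewrite tcyc t_rep23. Qed.
Lemma t_rep12 X Y : t X X Y = 0.
Proof. by rewrite tcyc t_rep13. Qed.

Lemma Ddd a c d : c != a -> d != a -> D (EE a a) (EE c d) = 0.
Proof.
move=> ca da; have := D_G (w := ev a) (x := ev c) (y := ev d).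
rewrite P_delta P_ev; apply; apply: evdot0 => //; by rewrite eq_sym.
Qed.

Lemma Ddisj a b c d : c != a -> c != b -> d != a -> d != b -> D (EE a b) (EE c d) = 0.
Proof.
move=> ca cb da db.
have ac : a != c by rewrite eq_sym.
have bc : b != c by rewrite eq_sym.
have h : forall s : C, s^* *: D (EE a b) (EE c d) + s *: D (EE b a) (EE c d) = 0.
  move=> s; have := D_G (w := ev a + s *: ev b) (x := ev c) (y := ev d).
  rewrite P_expand P_ev !DDl !DZl (Ddd ca da) (Ddd cb db) scaler0 add0r addr0.
  apply.
  - by rewrite adjD adjZ mulmxDl -scalemxAl (evdot0 ac) (evdot0 bc) scaler0 addr0.
  - by rewrite mulmxDr -scalemxAr (evdot0 da) (evdot0 db) scaler0 addr0.
by have [] := two_pt_mx h.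
Qed.

Lemma Rrel a b c : a != b -> a != c -> b != c ->
  [/\ D (EE a a) (EE a c) = D (EE a b) (EE b c), D (EE a b) (EE a c) = 0,
      D (EE b a) (EE a c) = D (EE b b) (EE b c) & D (EE b a) (EE b c) = 0].
Proof.
move=> ab ac bc.
have ba : b != a by rewrite eq_sym.
have ca : c != a by rewrite eq_sym.
have cb : c != b by rewrite eq_sym.
have H : forall s : C,
   s^* *: (D (EE a a) (EE a c) - D (EE a b) (EE b c)) + s^* ^+ 2 *: D (EE a b) (EE a c)
   + (s * s^*) *: (D (EE b a) (EE a c) - D (EE b b) (EE b c)) + s *: (- D (EE b a) (EE b c)) = 0.
  move=> s.
  have c1 : adj (ev a + s *: ev b) *m (s^* *: ev a - ev b) = 0 :> 'M[C]_1.
    rewrite adjD adjZ mulmxDl !mulmxBr -!scalemxAl -!scalemxAr !evdot (evdot0 ab) (evdot0 ba).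
    by move: (delta_mx 0 0 : 'M[C]_1) => u; apply/matrixP => i j; rewrite !mxE; ring.
  have c2 : adj (ev c) *m (ev a + s *: ev b) = 0 :> 'M[C]_1.
    by rewrite mulmxDr -scalemxAr (evdot0 ca) (evdot0 cb) scaler0 addr0.
  have h := D_G c1 c2.
  rewrite P_expand mulmxBl -scalemxAl !P_ev in h.
  rewrite !(DBr, DZr, DDl, DZl) (Ddd ba ca) (Ddd ab cb) in h.
  apply: (etrans _ h).
  by apply/matrixP => i j; rewrite !mxE; ring.
have [e1 e2 e3 e4] := four_pt_mx H.
split => //.
- by apply/eqP; rewrite -subr_eq0; apply/eqP.
- by apply/eqP; rewrite -subr_eq0; apply/eqP.
- by apply/eqP; rewrite -oppr_eq0; apply/eqP.
Qed.

Lemma Rrel' a b c : a != b -> a != c -> b != c ->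
  [/\ D (EE a a) (EE c a) = D (EE b a) (EE c b), D (EE b a) (EE c a) = 0,
      D (EE a b) (EE c a) = D (EE b b) (EE c b) & D (EE a b) (EE c b) = 0].
Proof.
move=> ab ac bc.
have ba : b != a by rewrite eq_sym.
have ca : c != a by rewrite eq_sym.
have cb : c != b by rewrite eq_sym.
have H : forall s : C,
   s^* *: (D (EE a a) (EE c a) - D (EE b a) (EE c b)) + s^* ^+ 2 *: D (EE b a) (EE c a)
   + (s * s^*) *: (D (EE a b) (EE c a) - D (EE b b) (EE c b)) + s *: (- D (EE a b) (EE c b)) = 0.
  move=> s.
  have c1 : adj (ev a + s^* *: ev b) *m ev c = 0 :> 'M[C]_1.
    by rewrite adjD adjZ mulmxDl -scalemxAl (evdot0 ac) (evdot0 bc) scaler0 addr0.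
  have c2 : adj (s *: ev a - ev b) *m (ev a + s^* *: ev b) = 0 :> 'M[C]_1.
    rewrite adjB adjZ mulmxBl !mulmxDr -!scalemxAl -!scalemxAr !evdot (evdot0 ab) (evdot0 ba).
    by move: (delta_mx 0 0 : 'M[C]_1) => u; apply/matrixP => i j; rewrite !mxE; ring.
  have h := D_G c1 c2.
  rewrite P_expand adjB adjZ mulmxBr -scalemxAr !P_ev conjCK in h.
  rewrite !(DBr, DZr, DDl, DZl) (Ddd ca ba) (Ddd cb ab) in h.
  apply: (etrans _ h).
  by apply/matrixP => i j; rewrite !mxE; ring.
have [e1 e2 e3 e4] := four_pt_mx H.
split => //.
- by apply/eqP; rewrite -subr_eq0; apply/eqP.
- by apply/eqP; rewrite -subr_eq0; apply/eqP.
- by apply/eqP; rewrite -oppr_eq0; apply/eqP.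
Qed.
Definition kappa a d := D (EE a a) (EE a d) a d.

Lemma kappa_sym a b : a != b -> kappa a b = kappa b a.
Proof.
move=> ab; have ba : b != a by rewrite eq_sym.
have g : good (EE a a + EE b b).
  by rewrite -!P_delta; apply: good_addP; apply: good_P; apply: ev_neq0.
have e := D_good (M := EE b a) g.
have p1 : EE a a *m EE b a = 0 by apply: mul_delta_mx_0.
have p2 : EE b a *m EE b b = 0 by apply: mul_delta_mx_0.
rewrite mulmxDl mulmxDr p1 p2 !mul_delta_mx add0r addr0 in e.
have {}e := e (erefl _).
rewrite DDl in e; move/matrixP: e => /(_ b a); rewrite !mxE => e.
have hh : t (EE a b) (EE a a) (EE b a) = - t (EE b a) (EE a a) (EE a b).
  by rewrite tcyc tA [t (EE b a) _ _]tcyc.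
rewrite /kappa !t_entry; move: e; rewrite !t_entry hh => e.
by apply/eqP; rewrite -subr_eq0 -oppr_eq0 -e; apply/eqP; ring.
Qed.

Lemma kappa_tri a b c : a != b -> a != c -> b != c -> kappa a c = kappa b a.
Proof.
move=> ab ac bc.
have ba : b != a by rewrite eq_sym.
have ca : c != a by rewrite eq_sym.
have [e1 _ _ _] := Rrel ab ac bc.
have [f1 _ _ _] := Rrel bc ba ca.
by rewrite /kappa e1 f1 !t_entry tcyc.
Qed.

Section Norm.
Variables i0 i1 : 'I_n.
Hypothesis i01 : i0 != i1.
Hypothesis hnorm : kappa i0 i1 = 0.

Lemma kappa0 a d : a != d -> kappa a d = 0.
Proof.
have i10 : i1 != i0 by rewrite eq_sym.
have k0 : forall x, x != i0 -> kappa i0 x = 0.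
  move=> x x0; case: (eqVneq x i1) => [->|x1] //.
  have h0x : i0 != x by rewrite eq_sym.
  have h1x : i1 != x by rewrite eq_sym.
  by rewrite (kappa_tri i01 h0x h1x) (kappa_sym i10).
move=> ad; case: (eqVneq a i0) ad => [->|a0] ad; first by apply: k0; rewrite eq_sym.
case: (eqVneq d i0) ad => [->|d0] ad; first by rewrite kappa_sym // k0.
have h0d : i0 != d by rewrite eq_sym.
by rewrite (kappa_tri a0 ad h0d) k0 // eq_sym.
Qed.

Lemma Phi1 a d : a != d -> D (EE a a) (EE a d) = 0.
Proof.
move=> ad; have da : d != a by rewrite eq_sym.
apply/matrixP => q p; rewrite [RHS]mxE t_entry.
case: (eqVneq p a) => [->|pa]; case: (eqVneq q a) => [->|qa].
- exact: t_rep12.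
- have aq : a != q by rewrite eq_sym.
  case: (eqVneq q d) => [->|qd]; first exact: t_rep13.
  rewrite tcyc; apply: t_zero.
  have dq : d != q by rewrite eq_sym.
  by have [_ -> _ _] := Rrel ad aq dq.
- case: (eqVneq p d) => [->|pd].
    by rewrite -t_entry; apply: kappa0.
  have ap : a != p by rewrite eq_sym.
  have [e1 _ _ _] := Rrel ap ad pd.
  rewrite -t_entry e1 t_entry tcyc tA; apply/eqP; rewrite oppr_eq0; apply/eqP.
  apply: t_zero.
  by have [_ -> _ _] := Rrel pa pd ad.
- rewrite tcyc tcyc; apply: t_zero.
  by apply: Ddisj; rewrite eq_sym.
Qed.

Lemma Phi2 a d : a != d -> D (EE a a) (EE d a) = 0.
Proof.
move=> ad; have da : d != a by rewrite eq_sym.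
apply/matrixP => q p; rewrite [RHS]mxE t_entry.
case: (eqVneq p a) => [->|pa]; case: (eqVneq q a) => [->|qa].
- exact: t_rep12.
- have aq : a != q by rewrite eq_sym.
  case: (eqVneq q d) => [->|qd].
    rewrite tB -(tcyc (EE d a)) -t_entry.
    by have := kappa0 ad; rewrite /kappa => ->; rewrite oppr0.
  have [e1 _ _ e4] := Rrel' aq ad qd.
  rewrite -t_entry e1 t_entry tB; apply/eqP; rewrite oppr_eq0; apply/eqP.
  by apply: t_zero.
- case: (eqVneq p d) => [->|pd]; first exact: t_rep13.
  have dp : d != p by rewrite eq_sym.
  have ap : a != p by rewrite eq_sym.
  rewrite tcyc; apply: t_zero.
  by have [_ _ _ ->] := Rrel' da dp ap.
- rewrite tcyc tcyc; apply: t_zero.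
  by apply: Ddisj; rewrite eq_sym.
Qed.

Lemma Phi a c d : D (EE a a) (EE c d) = 0.
Proof.
case: (eqVneq c a) => [->|ca]; case: (eqVneq d a) => [->|da].
- exact: DXX.
- by apply: Phi1; rewrite eq_sym.
- by apply: Phi2; rewrite eq_sym.
- exact: Ddd.
Qed.

Lemma Doff a b c d : a != b -> c != d -> (c != b) || (d != a) ->
  D (EE a b) (EE c d) = 0.
Proof.
move=> ab cd h.
have ba : b != a by rewrite eq_sym.
case: (eqVneq c a) cd h => [->|ca] cd h.
  case: (eqVneq d b) => [->|db]; first exact: DXX.
  have bd : b != d by rewrite eq_sym.
  by have [_ -> _ _] := Rrel ab cd bd.
case: (eqVneq c b) cd h => [->|cb] cd h.
  have da : d != a by case/orP: h => // /negP; rewrite eqxx.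
  have ad : a != d by rewrite eq_sym.
  have bd : b != d by [].
  have [e1 _ _ _] := Rrel ab ad bd.
  by rewrite -e1 Phi.
have ac : a != c by rewrite eq_sym.
have bc : b != c by rewrite eq_sym.
case: (eqVneq d a) => [->|da].
  by have [_ _ -> _] := Rrel' ab ac bc; rewrite Phi.
case: (eqVneq d b) => [->|db].
  by have [_ _ _ ->] := Rrel' ab ac bc.
exact: Ddisj.
Qed.

Lemma Dswap a b : a != b -> D (EE a b) (EE b a) = 0.
Proof.
move=> ab; have ba : b != a by rewrite eq_sym.
apply/matrixP => q p; rewrite [RHS]mxE t_entry.
case: (eqVneq p q) => [->|pq].
  by rewrite tcyc tA; apply/eqP; rewrite oppr_eq0; apply/eqP; apply: t_zero; apply: Phi.
rewrite tcyc.
case: (eqVneq p a) pq => [->|pa] pq.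
  case: (eqVneq q b) => [->|qb]; first exact: t_rep13.
  by apply: t_zero; apply: Doff => //; rewrite qb orbT.
by apply: t_zero; apply: Doff => //; rewrite pa.
Qed.

Lemma Dall a b c d : D (EE a b) (EE c d) = 0.
Proof.
case: (eqVneq a b) => [->|ab]; first exact: Phi.
case: (eqVneq c d) => [->|cd]; first by rewrite Dsym Phi oppr0.
case: (eqVneq c b) cd => [->|cb] cd; last by apply: Doff => //; rewrite cb.
case: (eqVneq d a) ab cd => [->|da] ab cd; first exact: Dswap.
by apply: Doff => //; rewrite da orbT.
Qed.

Lemma D0r M : D M 0 = 0.
Proof. by rewrite Dsym D0l oppr0. Qed.

Lemma Dzero X Y : D X Y = 0.
Proof.
have Hl : forall (I : finType) (F : I -> 'M[C]_n) Y, (forall i, D (F i) Y = 0) -> D (\sum_i F i) Y = 0.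
  move=> I F Z hF; apply: (big_rec (fun x => D x Z = 0)) => [|i x _ hx]; first exact: D0l.
  by rewrite DDl hF hx addr0.
have Hr : forall (I : finType) (F : I -> 'M[C]_n) X, (forall i, D X (F i) = 0) -> D X (\sum_i F i) = 0.
  move=> I F Z hF; apply: (big_rec (fun x => D Z x = 0)) => [|i x _ hx]; first exact: D0r.
  by rewrite DDr hF hx addr0.
rewrite (matrix_sum_delta X); apply: (Hl) => i; apply: (Hl) => j.
rewrite DZl (matrix_sum_delta Y); apply/eqP; rewrite scaler_eq0; apply/orP; right; apply/eqP.
apply: (Hr) => k; apply: (Hr) => l.
by rewrite DZr Dall scaler0.
Qed.

End Norm.
End Main3.

Lemma density_delta (C : numClosedFieldType) (n : nat) (i : 'I_n) :
  density (delta_mx i i : 'M[C]_n).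
Proof.
have := good_dens (good_P (ev_neq0 C i)); rewrite P_delta.
have -> : \tr (delta_mx i i : 'M[C]_n) = 1.
  by rewrite -[delta_mx i i]mulmx1 tr_delta mxE eqxx.
by rewrite invr1 scale1r.
Qed.

Unset Implicit Arguments.

Theorem proposition6 (C : numClosedFieldType) (n : nat)
  (Theta : 'M[C]_n -> 'M[C]_n -> 'M[C]_n)
  (Hlin_rho : forall (a : C) (r1 r2 M : 'M[C]_n),
      Theta (a *: r1 + r2) M = a *: Theta r1 M + Theta r2 M)
  (Hlin_M : forall rho : 'M[C]_n, density rho ->
      forall (a : C) (M1 M2 : 'M[C]_n),
        Theta rho (a *: M1 + M2) = a *: Theta rho M1 + Theta rho M2)
  (Hcomm : forall rho : 'M[C]_n, density rho ->
      forall M : 'M[C]_n, rho *m M - M *m rho = 0 -> Theta rho M = rho *m M)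
  (Hsa : forall rho : 'M[C]_n, density rho ->
      forall X Y : 'M[C]_n, hs_inner X (Theta rho Y) = hs_inner (Theta rho X) Y) :
  exists mu : C, mu \is Num.real /\
    (forall rho : 'M[C]_n, density rho ->
       forall M : 'M[C]_n, Theta rho M = mu *: (rho *m M) + (1 - mu) *: (M *m rho)) /\
    ((forall rho : 'M[C]_n, density rho ->
        forall M : 'M[C]_n, 0 <= hs_inner M (Theta rho M)) ->
     0 <= mu <= 1).
Proof.
case: n Theta Hlin_rho Hlin_M Hcomm Hsa => [|[|m]] Theta Hlin_rho Hlin_M Hcomm Hsa.
- exists 0; split; first exact: rpred0.
  split; last by rewrite lexx ler01.
  by move=> rho _ M; rewrite [LHS]thinmx0 [RHS]thinmx0.
- exists 0; split; first exact: rpred0.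
  split; last by rewrite lexx ler01.
  have c1 : forall A B : 'M[C]_1, A *m B = B *m A.
    move=> A B; apply/matrixP => i j.
    by rewrite (ord1 i) (ord1 j) !mxE !big_ord1 mulrC.
  move=> rho hr M; rewrite Hcomm //; last by rewrite c1 subrr.
  by rewrite scale0r add0r subr0 scale1r c1.
set i0 : 'I_m.+2 := 0; set i1 : 'I_m.+2 := 1.
have i01 : i0 != i1 by [].
have i10 : i1 != i0 by [].
set mu := Theta (delta_mx i0 i0) (delta_mx i0 i1) i0 i1.
have mu_real : mu^* = mu.
  have := Tadj Hlin_rho Hsa (delta_mx i0 i0) (delta_mx i0 i1) (delta_mx i0 i1).
  by rewrite hadjE adj_delta hs_delta hsC hs_delta /mu => e; rewrite -e.
have hnorm : kappa Theta mu i0 i1 = 0.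
  rewrite /kappa DE mul_delta_mx mul_delta_mx_0 // !mxE !eqxx /=.
  rewrite /mu; ring.
have Dz := Dzero Hlin_rho Hlin_M Hcomm Hsa mu_real i01 hnorm.
have form : forall X Y, Theta X Y = mu *: (X *m Y) + (1 - mu) *: (Y *m X).
  move=> X Y; apply/eqP; rewrite -subr_eq0 opprD addrA; apply/eqP.
  by rewrite -DE Dz.
exists mu; split; first by rewrite CrealE mu_real.
split; first by move=> rho _ M; apply: form.
move=> hpos.
have h1 := hpos _ (density_delta C i0) (delta_mx i0 i1).
have h2 := hpos _ (density_delta C i0) (delta_mx i1 i0).
rewrite hs_delta form mul_delta_mx mul_delta_mx_0 // scaler0 addr0 mxE mxE !eqxx /= mulr1 in h1.
rewrite hs_delta form mul_delta_mx mul_delta_mx_0 // scaler0 add0r mxE mxE !eqxx /= mulr1 in h2.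
by rewrite h1 -subr_ge0 h2.
Qed.
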